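(* Let $G$ be an infinite simple undirected graph with finite chromatic number $\chi(G)$. Then there is a minor $M$ of $G$ such that $M\not\cong G$ and $\chi(M)=\chi(G)$.
   Context: Graphs are simple and undirected: $G=(V,E)$ with $E \subseteq \{\{x,y\}: x,y\in V,\ x\neq y\}$. $\chi(G)$ denotes the chromatic number of $G$, i.e. the least cardinal $\lambda$ such that there is a graph homomorphism $G \to K_\lambda$; $K_\alpha$ is the complete graph on $\alpha$ vertices. Disjoint sets $S,T\subseteq V(G)$ are connected to each other if there are $s\in S$, $t\in T$ with $\{s,t\}\in E(G)$. For a collection $\mathcal D$ of pairwise disjoint, nonempty subsets of $V(G)$, each inducing a connected subgraph, let $G(\mathcal D)$ be the graph with vertex set $\mathcal D$ in which distinct $d,e\in\mathcal D$ are adjacent iff $d$ and $e$ are connected to each other. A graph $M$ is a minor of $G$ if there is such a collection $\mathcal D$ and an injective graph homomorphism $M \to G(\mathcal D)$. *)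

(* Defs.v *)
From Stdlib Require Import List Relations Arith.

Definition simple_graph {V : Type} (E : V -> V -> Prop) : Prop :=
  (forall x y, E x y -> E y x) /\ (forall x, ~ E x x).

Definition infinite_type (V : Type) : Prop :=
  ~ exists l : list V, forall v, In v l.

Definition colorable {V : Type} (E : V -> V -> Prop) (n : nat) : Prop :=
  exists c : V -> nat, (forall v, c v < n) /\ (forall x y, E x y -> c x <> c y).

Definition chromatic_number {V : Type} (E : V -> V -> Prop) (k : nat) : Prop :=
  colorable E k /\ (forall m, colorable E m -> k <= m).

Definition connected_set {V : Type} (E : V -> V -> Prop) (S : V -> Prop) : Prop :=
  forall x y, S x -> S y ->
    clos_refl_trans V (fun a b => S a /\ S b /\ E a b) x y.

Definition sets_connected {V : Type} (E : V -> V -> Prop) (S T : V -> Prop) : Prop :=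
  exists s t, S s /\ T t /\ E s t.

(* phi : W -> (V -> Prop) picks, for each vertex w of M, the element phi w of a
   collection D of pairwise disjoint, nonempty, connected vertex sets of G;
   w |-> phi w is then an injective homomorphism M -> G(D). *)
Definition minor_model {V W : Type} (E : V -> V -> Prop) (F : W -> W -> Prop)
    (phi : W -> V -> Prop) : Prop :=
  (forall w, exists v, phi w v) /\
  (forall w, connected_set E (phi w)) /\
  (forall w w' v, w <> w' -> phi w v -> phi w' v -> False) /\
  (forall w w', F w w' -> sets_connected E (phi w) (phi w')).

Definition is_minor {V W : Type} (E : V -> V -> Prop) (F : W -> W -> Prop) : Prop :=
  exists phi : W -> V -> Prop, minor_model E F phi.

Definition isomorphic {W V : Type} (F : W -> W -> Prop) (E : V -> V -> Prop) : Prop :=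
  exists (f : W -> V) (g : V -> W),
    (forall w, g (f w) = w) /\ (forall v, f (g v) = v) /\
    (forall x y, F x y <-> E (f x) (f y)).

(* Main.v *)
Require Import Defs.
From Stdlib Require Import List Relations Arith.
From Stdlib Require Import Lia ClassicalEpsilon ClassicalDescription ProofIrrelevance Classical.
From mathcomp Require Import boolp classical_sets filter.

Local Open Scope classical_set_scope.
Section Compact.
Variables (V : Type) (E : V -> V -> Prop) (m : nat).

Definition loc_col (l : list V) : Prop :=
  exists c : V -> nat, (forall v, In v l -> lt (c v) m) /\
    (forall x y, In x l -> In y l -> E x y -> c x <> c y).

Hypothesis Hloc : forall l, loc_col l.

Definition cL (L : list V) : V -> nat :=
  proj1_sig (ClassicalEpsilon.constructive_indefinite_description _ (Hloc L)).

Lemma cL_spec L : (forall v, In v L -> lt (cL L v) m) /\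
    (forall x y, In x L -> In y L -> E x y -> cL L x <> cL L y).
Proof. unfold cL. destruct (ClassicalEpsilon.constructive_indefinite_description _ (Hloc L)). exact a. Qed.

Definition F0 : set_system (list V) :=
  fun A => exists l, forall L, incl l L -> A L.

Lemma F0_filter : Filter F0.
Proof.
  constructor.
  - exists nil. intros; exact I.
  - intros A B [l1 H1] [l2 H2]. exists (l1 ++ l2). intros L HL. split.
    + apply H1. intros x Hx. apply HL. apply in_or_app. left; exact Hx.
    + apply H2. intros x Hx. apply HL. apply in_or_app. right; exact Hx.
  - intros P Q HPQ [l Hl]. exists l. intros L HL. apply HPQ. apply Hl; exact HL.
Qed.

Lemma F0_proper : ProperFilter F0.
Proof.
  apply Build_ProperFilter_ex; [|exact F0_filter].
  intros P [l Hl]. exists l. apply Hl. intros x Hx; exact Hx.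
Qed.

Lemma compactness : colorable E m.
Proof.
  destruct (ultraFilterLemma F0_proper) as [G [GU sub]].
  assert (GP : ProperFilter G) by (apply ultra_proper).
  assert (GF : Filter G) by (apply filter_filter).
  assert (Hcol : forall v, exists j, lt j m /\ G (fun L => cL L v = j)).
  { intro v.
    assert (claim : forall n, G (fun L => In v L /\ le n (cL L v)) \/
                    exists j, lt j n /\ G (fun L => cL L v = j)).
    { induction n as [|n IH].
      - left. apply sub. exists (v :: nil). intros L HL. split.
        + apply HL. left; reflexivity.
        + lia.
      - destruct IH as [IH|[j [Hj Gj]]].
        + destruct (in_ultra_setVsetC (fun L => cL L v = n) GU) as [Hn|Hn].
          * right. exists n. split; [lia|exact Hn].
          * left. apply (filterS (P := (fun L => In v L /\ le n (cL L v)) `&` (~` (fun L => cL L v = n)))).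
            { intros L [[H1 H2] H3]. split; [exact H1|]. unfold setC in H3. simpl in H3. lia. }
            apply filterI; assumption.
        + right. exists j. split; [lia|exact Gj]. }
    destruct (claim m) as [Hm|[j [Hj Gj]]].
    - exfalso. apply (filter_not_empty G).
      apply (filterS (P := fun L => In v L /\ le m (cL L v))); [|exact Hm].
      intros L [H1 H2]. pose proof (proj1 (cL_spec L) v H1). lia.
    - exists j; split; assumption. }
  exists (fun v => proj1_sig (ClassicalEpsilon.constructive_indefinite_description _ (Hcol v))).
  split.
  - intro v. exact (proj1 (proj2_sig (ClassicalEpsilon.constructive_indefinite_description _ (Hcol v)))).
  - intros x y Exy.
    pose proof (proj2 (proj2_sig (ClassicalEpsilon.constructive_indefinite_description _ (Hcol x)))) as Gx.
    pose proof (proj2 (proj2_sig (ClassicalEpsilon.constructive_indefinite_description _ (Hcol y)))) as Gy.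
    assert (Gi : G (fun L => incl (x :: y :: nil) L)).
    { apply sub. exists (x :: y :: nil). intros L HL; exact HL. }
    pose proof (filterI (filterI Gx Gy) Gi) as Gxy.
    destruct (filter_ex Gxy) as [L [[H1 H2] H3]].
    intro Heq. apply (proj2 (cL_spec L) x y).
    + apply H3. left; reflexivity.
    + apply H3. right; left; reflexivity.
    + exact Exy.
    + simpl. rewrite H1, H2. exact Heq.
Qed.
End Compact.


Lemma sig_list (V : Type) (P : V -> Prop) (l0 : list V) :
  (forall x, In x l0 -> P x) ->
  exists lw : list {v | P v}, forall w : {v | P v}, In (proj1_sig w) l0 -> In w lw.
Proof.
  induction l0 as [|a l0 IH]; intros H.
  - exists nil. intros w Hw; destruct Hw.
  - destruct IH as [lw Hlw].
    { intros x Hx. apply H. right; exact Hx. }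
    exists (exist _ a (H a (or_introl eq_refl)) :: lw).
    intros [w pw] Hw. simpl in Hw. destruct Hw as [Hw|Hw].
    + left. subst a. f_equal. apply proof_irrelevance.
    + right. apply (Hlw (exist _ w pw)). exact Hw.
Qed.

Theorem mainTheorem5 :
  forall (V : Type) (E : V -> V -> Prop),
    simple_graph E -> infinite_type V ->
    forall k : nat, chromatic_number E k ->
    exists (W : Type) (F : W -> W -> Prop),
      simple_graph F /\ is_minor E F /\ ~ isomorphic F E /\ chromatic_number F k.
Proof.
  intros V E [Esym Eirr] Hinf k [Hk Hmin].
  assert (Hne : exists v : V, True).
  { apply NNPP. intro Hn. apply Hinf. exists nil. intro v. apply Hn. exists v; exact I. }
  destruct Hne as [v0 _].
  destruct k as [|m].
  { exfalso. destruct Hk as [c [Hc _]]. specialize (Hc v0). lia. }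
  assert (Hnm : ~ colorable E m) by (intro Hc; specialize (Hmin m Hc); lia).
  assert (Hl : exists l, ~ loc_col V E m l).
  { apply NNPP. intro Hn. apply Hnm. apply (compactness V E m).
    intro l. apply NNPP. intro Hl. apply Hn. exists l; exact Hl. }
  destruct Hl as [l Hl].
  exists {v | In v l}, (fun w w' => E (proj1_sig w) (proj1_sig w')).
  split; [|split; [|split]].
  - split.
    + intros x y H. apply Esym; exact H.
    + intros x. apply Eirr.
  - exists (fun w v => v = proj1_sig w). split; [|split; [|split]].
    + intro w. exists (proj1_sig w). reflexivity.
    + intros w x y Hx Hy. subst x. subst y. apply rt_refl.
    + intros w w' v Hww' H1 H2. apply Hww'. destruct w as [w pw], w' as [w' pw'].
      simpl in *. subst w. subst w'. f_equal. apply proof_irrelevance.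
    + intros w w' Hf. exists (proj1_sig w), (proj1_sig w').
      split; [reflexivity|split; [reflexivity|exact Hf]].
  - intros [f [g [Hgf [Hfg _]]]].
    destruct (sig_list V (fun v => In v l) l (fun x Hx => Hx)) as [lw Hlw].
    apply Hinf. exists (map f lw). intro v.
    rewrite <- (Hfg v). apply in_map. apply Hlw. exact (proj2_sig (g v)).
  - split.
    + destruct Hk as [c [Hc1 Hc2]]. exists (fun w => c (proj1_sig w)). split.
      * intro w; apply Hc1.
      * intros x y H. apply Hc2; exact H.
    + intros m' [cW [HcW1 HcW2]].
      destruct (le_lt_dec (S m) m') as [Hle|Hlt]; [exact Hle|].
      exfalso. apply Hl.
      exists (fun v => match excluded_middle_informative (In v l) with
                       | left h => cW (exist _ v h) | right _ => 0 end).
      split.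
      * intros v Hv. destruct (excluded_middle_informative (In v l)) as [h|h].
        -- specialize (HcW1 (exist _ v h)). lia.
        -- contradiction.
      * intros x y Hx Hy Exy.
        destruct (excluded_middle_informative (In x l)) as [hx|hx]; [|contradiction].
        destruct (excluded_middle_informative (In y l)) as [hy|hy]; [|contradiction].
        apply (HcW2 (exist _ x hx) (exist _ y hy)). exact Exy.
Qed.
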